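(* Let $d\ge1$. (i) For $\lceil (d+1)/2\rceil\le j\le d$: $A(d+1,j,1)\le A(d+1,j,2)\le\dots\le A(d+1,j,d+1)$. (ii) For $0\le j\le\lfloor (d-1)/2\rfloor$: $A(d+1,j,1)\ge A(d+1,j,2)\ge\dots\ge A(d+1,j,d+1)$. (iii) If $d$ is even: $A(d+1,\tfrac d2,1)\le A(d+1,\tfrac d2,2)\le\dots\le A(d+1,\tfrac d2,\tfrac d2+1)\ge A(d+1,\tfrac d2,\tfrac d2+2)\ge\dots\ge A(d+1,\tfrac d2,d+1)$. (iv) For $0\le j\le d-1$: $A(d+1,j,1)=A(d+1,j+1,d+1)$.
   Context: $S_d$ is the symmetric group on $[d]=\{1,\dots,d\}$. For $\sigma\in S_d$, its descent set is $D(\sigma)=\{i\in[d-1]:\sigma(i)>\sigma(i+1)\}$ and $\mathrm{des}(\sigma)=\#D(\sigma)$. For $0\le i\le d-1$ and $1\le j\le d$, $A(d,i,j)=\#\{\sigma\in S_d:\mathrm{des}(\sigma)=i,\ \sigma(1)=j\}$. *)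

(* Defs.v *)
From mathcomp Require Import all_boot all_fingroup.
Set Implicit Arguments. Unset Strict Implicit. Unset Printing Implicit Defensive.

(* A permutation s : 'S_n of 'I_n = {0,..,n-1} is identified with the
   permutation sigma of [n] = {1,..,n} given by sigma(k+1) = s(k) + 1.
   word s = [:: sigma(1); ...; sigma(n)]. *)
Definition word (n : nat) (s : 'S_n) : seq nat := [seq (s x).+1 | x <- enum 'I_n].

(* sigma(k) for k in [n] (1-indexed), 0 outside. *)
Definition sigma (n : nat) (s : 'S_n) (k : nat) : nat := nth 0 (word s) k.-1.

Definition descent_set (n : nat) (s : 'S_n) : seq nat :=
  [seq i <- iota 1 n.-1 | sigma s i.+1 < sigma s i].

Definition des (n : nat) (s : 'S_n) : nat := size (descent_set s).

Definition A (d i j : nat) : nat :=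
  #|[set s : 'S_d | (des s == i) && (sigma s 1 == j)]|.

(* Main.v *)
Require Import Defs.
From mathcomp Require Import all_boot all_fingroup.
From Stdlib Require Import Lia.
Set Implicit Arguments. Unset Strict Implicit. Unset Printing Implicit Defensive.

Ltac nlia :=
  repeat match goal with
  | H : is_true (leq _ _) |- _ => move/leP: H => H
  | H : is_true (_ != _) |- _ => move/eqP: H => H
  | H : is_true (_ == _) |- _ => move/eqP: H => H
  | H : is_true (_ && _) |- _ => let a := fresh "a" in let b := fresh "b" in case/andP: H => a b
  | H : is_true (~~ leq _ _) |- _ => rewrite -ltnNge in H
  end;
  repeat match goal with
  | |- is_true (_ && _) => apply/andP; split
  end;
  try match goal with
  | |- is_true (_ == _) => apply/eqP
  | |- is_true (_ != _) => apply/eqP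
  | |- is_true (leq _ _) => apply/leP
  end;
  repeat match goal with
  | H : context [double _] |- _ => rewrite -addnn in H
  | H : context [addn] |- _ => rewrite -plusE in H
  | H : context [subn] |- _ => rewrite -minusE in H
  | H : context [muln] |- _ => rewrite -multE in H
  end;
  rewrite -?addnn -?plusE -?minusE -?multE; lia.

Fixpoint desw (w : seq nat) : nat :=
  match w with
  | x :: ((y :: _) as t) => (y < x) + desw t
  | _ => 0
  end.

Lemma desw_cons2 x y t : desw (x :: y :: t) = (y < x) + desw (y :: t).
Proof. by []. Qed.

Lemma deswE w :
  desw w = count (fun i => nth 0 w i < nth 0 w i.-1) (iota 1 (size w).-1).
Proof.
elim: w => [|x [|y t] IH] //.
rewrite desw_cons2 IH /=; congr (_ + _).
rewrite -[2]/(1 + 1) iotaDl count_map.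
apply: eq_in_count => i; rewrite mem_iota /=; case: i => //= i _.
Qed.

Lemma desw_le w : desw w <= (size w).-1.
Proof. by rewrite deswE (leq_trans (count_size _ _)) // size_iota. Qed.

Section W.
Variable n : nat.

Lemma size_word (s : 'S_n) : size (word s) = n.
Proof. by rewrite /word size_map size_enum_ord. Qed.

Lemma word_nth (s : 'S_n) (x : 'I_n) : nth 0 (word s) x = (s x).+1.
Proof. by rewrite /word (nth_map x) ?size_enum_ord // nth_ord_enum. Qed.

Lemma word_inj : injective (@word n).
Proof.
move=> s1 s2 E; apply/permP => x; apply/val_inj; apply: succn_inj.
by rewrite -!word_nth E.
Qed.

Lemma des_word (s : 'S_n) : des s = desw (word s).
Proof. by rewrite /des /descent_set size_filter deswE size_word. Qed.

Lemma sigma1 (s : 'S_n) : sigma s 1 = head 0 (word s).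
Proof. by rewrite /sigma nth0. Qed.

Lemma perm_word (s : 'S_n) : perm_eq (word s) (iota 1 n).
Proof.
apply: uniq_perm; last 2 first.
- exact: iota_uniq.
- move=> y; rewrite mem_iota add1n; apply/mapP/idP => [[x _ ->]|].
    by rewrite /= ltnS ltn_ord.
  case: y => // y /= Hy; exists ((s^-1)%g (@Ordinal n y Hy)).
    by rewrite mem_enum.
  by rewrite permKV.
rewrite map_inj_uniq ?enum_uniq // => x y /succn_inj /val_inj; apply: perm_inj.
Qed.

Lemma wordP w : perm_eq w (iota 1 n) -> exists s : 'S_n, word s = w.
Proof.
move=> pw.
have Sw : size w = n by rewrite (perm_size pw) size_iota.
have Uw : uniq w by rewrite (perm_uniq pw) iota_uniq.
have Hin (x : 'I_n) : 0 < nth 0 w x <= n.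
  have : nth 0 w x \in iota 1 n by rewrite -(perm_mem pw) mem_nth // Sw.
  by rewrite mem_iota add1n ltnS.
pose f (x : 'I_n) : 'I_n := insubd x (nth 0 w x).-1.
have fE x : val (f x) = (nth 0 w x).-1.
  rewrite /f insubdK //; have /andP[h1 h2] := Hin x.
  by move: h1 h2; case: (nth 0 w x).
have finj : injective f.
  move=> x y /(congr1 val); rewrite !fE => E.
  have /andP[hx _] := Hin x; have /andP[hy _] := Hin y.
  have E' : nth 0 w x = nth 0 w y by rewrite -(prednK hx) E prednK.
  apply/val_inj/eqP; rewrite -(nth_uniq 0 _ _ Uw) ?Sw ?ltn_ord //.
  by apply/eqP.
exists (perm finj).
rewrite /word (eq_map (g := fun x : 'I_n => nth 0 w x)); last first.
  move=> x; rewrite permE fE prednK //; by have /andP[] := Hin x.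
rewrite (map_comp (nth 0 w) val) val_enum_ord -{1}Sw. exact: mkseq_nth.
Qed.

End W.

Notation perms := permutations.

Lemma card_count (T : finType) (P : pred T) : #|[set x | P x]| = count P (enum T).
Proof.
rewrite cardsE cardE -size_filter; apply: perm_size; apply: uniq_perm.
- exact: enum_uniq.
- by rewrite filter_uniq ?enum_uniq.
move=> x; rewrite [RHS]mem_filter mem_enum [x \in enum T]mem_enum !inE andbT. by []. Qed.


Lemma A_count n i k :
  A n i k = count (fun w => (desw w == i) && (head 0 w == k)) (perms (iota 1 n)).
Proof.
rewrite /A.
have -> : [set s : 'S_n | (des s == i) && (sigma s 1 == k)] =
   [set s : 'S_n | (desw (word s) == i) && (head 0 (word s) == k)].
  by apply/setP => s; rewrite !inE des_word sigma1.
rewrite card_count -(count_map (@word n) (fun w => (desw w == i) && (head 0 w == k))).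
suff H : perm_eq (map (@word n) (enum 'S_n)) (perms (iota 1 n)) by apply: (seq.permP H).
apply: uniq_perm.
- by rewrite map_inj_uniq ?enum_uniq //; apply: word_inj.
- exact: permutations_uniq.
move=> w; rewrite mem_permutations; apply/mapP/idP => [[s _ ->]|].
  exact: perm_word.
by case/wordP => s <-; exists s; rewrite ?mem_enum.
Qed.

Lemma count_allpairs (P : pred (seq nat)) (l : seq nat) (g : nat -> seq (seq nat)) :
  count P [seq x :: t | x <- l, t <- g x] = \sum_(x <- l) count (fun t => P (x :: t)) (g x).
Proof.
elim: l => [|x l IH]; rewrite ?big_nil ?big_cons //=.
by rewrite count_cat count_map IH.
Qed.

Lemma count_perms (P : pred (seq nat)) s : uniq s -> 0 < size s ->
  count P (perms s) = \sum_(x <- s) count (fun t => P (x :: t)) (perms (rem x s)).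
Proof.
move=> Us Ss; rewrite (seq.permP (permutationsE Ss)) undup_id //.
exact: (count_allpairs P s (fun x => perms (rem x s))).
Qed.

Lemma count_head (P : pred (seq nat)) s k : uniq s -> k \in s ->
  count (fun w => P w && (head 0 w == k)) (perms s) =
  count (fun t => P (k :: t)) (perms (rem k s)).
Proof.
move=> Us ks; rewrite count_perms //; last by case: s ks {Us}.
rewrite (bigD1_seq k) //= big1_seq ?addn0.
  by apply: eq_count => t /=; rewrite eqxx andbT.
move=> x /andP[xk _]; transitivity (count pred0 (perms (rem x s))); last exact: count_pred0.
by apply: eq_count => t /=; rewrite (negbTE xk) andbF.
Qed.

Lemma count_split (Q : pred (seq nat)) s : uniq s -> 0 < size s ->
  count Q (perms s) = \sum_(m <- s) count (fun w => Q w && (head 0 w == m)) (perms s).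
Proof.
move=> Us Ss; rewrite count_perms //; apply: eq_big_seq => m ms.
by rewrite count_head.
Qed.

Lemma perms_map (f g : nat -> nat) s : cancel f g ->
  perm_eq (perms (map f s)) (map (map f) (perms s)).
Proof.
move=> fK; have finj := can_inj fK.
apply: uniq_perm; first exact: permutations_uniq.
  by rewrite map_inj_uniq ?permutations_uniq //; apply: inj_map.
move=> t; rewrite mem_permutations; apply/idP/mapP => [pt | [u pu ->]].
  exists (map g t).
    rewrite mem_permutations; have := perm_map g pt.
    by rewrite -map_comp (eq_map fK) map_id.
  rewrite -map_comp; transitivity (map id t); first by rewrite map_id.
  apply/eq_in_map => y yt.
  have : y \in map f s by rewrite -(perm_mem pt).
  by case/mapP => x _ ->; rewrite /= fK.
by rewrite mem_permutations in pu; apply: perm_map.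
Qed.

Definition fk k x := if x < k then x else x.+1.
Definition gk k y := if y < k then y else y.-1.

Lemma fkK k : cancel (fk k) (gk k).
Proof.
move=> x; rewrite /fk /gk; case: (ltnP x k) => h; first by rewrite h.
by rewrite ltnNge (leq_trans h (leqnSn _)).
Qed.

Lemma fk_lt k x y : (fk k x < fk k y) = (x < y).
Proof. by rewrite /fk; case: (ltnP x k) => h1; case: (ltnP y k) => h2; apply/idP/idP => h3; nlia. Qed.

Lemma fk_ltk k x : (fk k x < k) = (x < k).
Proof. rewrite /fk; case: (ltnP x k) => h1 //; apply/negbTE; rewrite -leqNgt; nlia. Qed.

Lemma desw_map k u : desw (map (fk k) u) = desw u.
Proof.
elim: u => [|x [|y t] IH] //.
by rewrite !map_cons desw_cons2 -map_cons IH desw_cons2 fk_lt.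
Qed.

Lemma desw_fk k u : u != [::] -> desw (k :: map (fk k) u) = (head 0 u < k) + desw u.
Proof.
by case: u => // x t _; rewrite map_cons desw_cons2 fk_ltk -map_cons desw_map.
Qed.

Lemma rem_iota k n : 0 < k <= n.+1 ->
  perm_eq (rem k (iota 1 n.+1)) (map (fk k) (iota 1 n)).
Proof.
move=> hk; apply: uniq_perm.
- by rewrite rem_uniq ?iota_uniq.
- by rewrite map_inj_uniq ?iota_uniq //; apply: (can_inj (fkK k)).
move=> y; change nat in y; rewrite mem_rem_uniq ?iota_uniq // inE mem_iota.
apply/andP/mapP => [[yk yin] | [x xin ->]].
  exists (gk k y); last first.
    rewrite /fk /gk; case: (ltnP y k) => h; first by rewrite h.
    have hy : k < y by nlia.
    rewrite ifF; last by apply/negbTE; rewrite -leqNgt; nlia.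
    by rewrite prednK //; nlia.
  by rewrite mem_iota /gk; case: (ltnP y k) => h; nlia.
move: xin; rewrite mem_iota /fk; case: (ltnP x k) => h xin; split; nlia.
Qed.

Definition Ap n i m := if i is i'.+1 then A n i' m else 0.

Lemma A_rec_iota n i k : 0 < n -> 0 < k <= n.+1 ->
  A n.+1 i k = \sum_(m <- iota 1 n) (if m < k then Ap n i m else A n i m).
Proof.
move=> n0 hk.
have kin : k \in iota 1 n.+1 by rewrite mem_iota; nlia.
rewrite A_count (count_head (fun w => desw w == i)) ?iota_uniq //.
rewrite (seq.permP (perm_permutations (rem_iota hk))).
rewrite (seq.permP (perms_map _ (fkK k))) count_map.
have E : count (preim (map (fk k)) (fun t => desw (k :: t) == i)) (perms (iota 1 n))
   = count (fun u => desw u + (head 0 u < k) == i) (perms (iota 1 n)).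
  apply: eq_in_count => u; rewrite mem_permutations => pu.
  change ((desw (k :: map (fk k) u) == i) = (desw u + (head 0 u < k) == i)).
  rewrite desw_fk; first by rewrite addnC.
  apply/eqP => u0.
  by move: (perm_size pu); rewrite u0 size_iota => n0'; rewrite -n0' in n0.
rewrite E (count_split _ (iota_uniq 1 n)) ?size_iota //; apply: eq_big_seq => m _.
rewrite /Ap; case: ifP => mk; [case: i {E} => [|i]|].
- transitivity (count pred0 (perms (iota 1 n))); last exact: count_pred0.
  by apply: eq_count => u /=; case: (@eqP _ (head 0 u) m) => [->|]; rewrite ?andbF ?andbT // mk addn1.
- rewrite A_count; apply: eq_count => u /=.
  by case: (@eqP _ (head 0 u) m) => [->|]; rewrite ?andbF ?andbT // mk addn1.
- rewrite A_count; apply: eq_count => u /=.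
  by case: (@eqP _ (head 0 u) m) => [->|]; rewrite ?andbF ?andbT // mk addn0.
Qed.


Lemma A_out n i k : 0 < n -> (k == 0) || (n < k) -> A n i k = 0.
Proof.
move=> n0 hk; rewrite A_count.
transitivity (count pred0 (perms (iota 1 n))); last exact: count_pred0.
apply: eq_in_count => w; rewrite mem_permutations => pw /=.
case: w pw => [|x t] pw.
  by move: (perm_size pw); rewrite size_iota => /= n0'; rewrite -n0' in n0.
have : x \in iota 1 n by rewrite -(perm_mem pw) mem_head.
rewrite mem_iota /= => hx; apply/negbTE; rewrite andbC; apply/nandP; left.
apply/eqP => xk; move: hx hk; rewrite xk => hx hk; case/orP: hk => hk; nlia.
Qed.

Lemma A_big n i k : 0 < n -> n <= i -> A n i k = 0.
Proof.
move=> n0 hi; rewrite A_count.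
transitivity (count pred0 (perms (iota 1 n))); last exact: count_pred0.
apply: eq_in_count => w; rewrite mem_permutations => pw /=.
have := desw_le w; rewrite (perm_size pw) size_iota => hd.
apply/negbTE; rewrite negb_and; apply/orP; left; apply/eqP => e; rewrite e in hd; nlia.
Qed.

Lemma A1 i k : A 1 i k = (i == 0) && (k == 1).
Proof.
rewrite A_count; have -> : perms (iota 1 1) = [:: [:: 1]] by [].
by rewrite /= addn0 (eq_sym 1) (eq_sym 0).
Qed.

Lemma Ap0 n i : 0 < n -> Ap n i 0 = 0.
Proof. by move=> n0; case: i => [|i] //=; rewrite A_out. Qed.

Lemma A_rec n i k : 0 < n -> 0 < k <= n.+1 ->
  A n.+1 i k = \sum_(0 <= m < k) Ap n i m + \sum_(k <= m < n.+2) A n i m.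
Proof.
move=> n0 hk; rewrite A_rec_iota //.
have -> : iota 1 n = index_iota 1 n.+1 by rewrite /index_iota subn1.
case/andP: hk => k1 k2.
rewrite (big_cat_nat k1 k2) /=; congr (_ + _).
  rewrite [RHS]big_ltn // Ap0 // add0n; apply: eq_big_nat => m /andP[_ ->] //.
rewrite [RHS]big_nat_recr //=.
rewrite A_out ?ltnSn ?orbT // addn0.
apply: eq_big_nat => m /andP[hm _]; by rewrite ltnNge hm.
Qed.

Lemma krange k N : ((k == 0) || (N < k)) || (0 < k <= N).
Proof. by case: k => [|k] //=; rewrite ltnNge orNb. Qed.

Lemma sum_le (F G : nat -> nat) a b :
  (forall m, a <= m < b -> F m <= G m) -> \sum_(a <= m < b) F m <= \sum_(a <= m < b) G m.
Proof.
move=> H; rewrite big_nat_cond [X in _ <= X]big_nat_cond.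
by apply: leq_sum => m /andP[hm _]; apply: H.
Qed.

Lemma sum0 (F : nat -> nat) a b :
  (forall m, a <= m < b -> F m = 0) -> \sum_(a <= m < b) F m = 0.
Proof.
move=> H; rewrite big_nat_cond; apply: big1 => m /andP[hm _]; exact: H.
Qed.

Lemma sum_rev (F : nat -> nat) a b c : a <= b -> b <= c.+1 ->
  \sum_(a <= m < b) F (c - m) = \sum_(c.+1 - b <= m < c.+1 - a) F m.
Proof.
elim: b => [|b IH] hab hb.
  by rewrite !big_geq //; nlia.
case: (eqVneq a b.+1) => [->|ne]; first by rewrite !big_geq.
have hab' : a <= b by nlia.
rewrite big_nat_recr // IH //; last by nlia.
rewrite subSS (subSn (_ : b <= c)); last by nlia.
rewrite [in RHS]big_ltn; last by nlia.
by rewrite addnC.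
Qed.

Lemma A_sym n : 0 < n -> forall i k, i <= n.-1 -> A n i k = A n (n.-1 - i) (n.+1 - k).
Proof.
elim: n => // n IH _ i k.
case: n IH => [_|n IH] /= hi.
  have -> : i = 0 by nlia.
  by rewrite !A1; case: k => [|[|k]].
set N := n.+1.
have IH' : forall i k, i <= n -> A N i k = A N (n - i) (N.+1 - k) by exact: IH.
case/orP: (krange k N.+1) => hk.
  rewrite !A_out //; case/orP: hk => hk; apply/orP; [right|left]; nlia.
have hk' : 0 < N.+2 - k <= N.+1 by nlia.
rewrite !A_rec //; rewrite addnC; congr (_ + _).
- case: (eqVneq i N) => [->|ne].
    by rewrite subnn !sum0 // => m _; rewrite A_big.
  have -> : N - i = (n - i).+1 by nlia.
  symmetry; transitivity (\sum_(0 <= m < N.+2 - k) A N i (N.+1 - m)).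
    apply: eq_big_nat => m _ /=; rewrite IH'; [congr (A _ _ _); nlia | nlia].
  rewrite sum_rev //; last by nlia.
  by rewrite subn0 (_ : N.+2 - (N.+2 - k) = k) //; nlia.
- case: i hi => [|j] hj.
    by rewrite subn0 !sum0 // => m _; rewrite A_big.
  symmetry; transitivity (\sum_(N.+2 - k <= m < N.+2) A N j (N.+1 - m)).
    apply: eq_big_nat => m _ /=; rewrite IH'; [congr (A _ _ _); nlia | nlia].
  rewrite sum_rev //; last by nlia.
  by rewrite subnn (_ : N.+2 - (N.+2 - k) = k) //; nlia.
Qed.

Lemma Tot n c : 0 < c -> n = c.*2 ->
  \sum_(0 <= m < n.+2) A n c m = \sum_(0 <= m < n.+2) A n c.-1 m.
Proof.
move=> c0 hn; have n0 : 0 < n by nlia.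
transitivity (\sum_(0 <= m < n.+2) A n c.-1 (n.+1 - m)).
  apply: eq_big_nat => m _; rewrite A_sym //; last by nlia.
  by congr (A _ _ _); nlia.
by rewrite sum_rev // subnn subn0.
Qed.

Lemma split_le (X Y : nat -> nat) b k : k <= b ->
  \sum_(0 <= m < b) X m = \sum_(0 <= m < b) Y m ->
  \sum_(0 <= m < k) X m <= \sum_(0 <= m < k) Y m ->
  \sum_(k <= m < b) Y m <= \sum_(k <= m < b) X m.
Proof.
move=> hk E H; rewrite !(big_cat_nat (leq0n k) hk) /= in E.
nlia.
Qed.

Lemma split_le2 (X Y : nat -> nat) b k : k <= b ->
  \sum_(0 <= m < b) X m = \sum_(0 <= m < b) Y m ->
  \sum_(k <= m < b) Y m <= \sum_(k <= m < b) X m ->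
  \sum_(0 <= m < k) X m <= \sum_(0 <= m < k) Y m.
Proof.
move=> hk E H; rewrite !(big_cat_nat (leq0n k) hk) /= in E.
nlia.
Qed.

Lemma cross (X Y : nat -> nat) a b : a <= b -> (forall m, Y m <= X m) ->
  \sum_(0 <= m < a) X m + \sum_(0 <= m < b) Y m <=
  \sum_(0 <= m < a) Y m + \sum_(0 <= m < b) X m.
Proof.
move=> hab H; rewrite !(big_cat_nat (leq0n a) hab) /=.
have : \sum_(a <= m < b) Y m <= \sum_(a <= m < b) X m by apply: sum_le.
move=> h; nlia.
Qed.

Definition Qa n := forall j k, 0 < j -> j.*2 < n -> A n j.-1 k <= A n j k.
Definition Qb n := forall j k, n < j.*2 -> A n j k <= A n j.-1 k.
Definition Qc n := forall c, n = c.*2 -> forall k,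
  (k <= c -> A n c k <= A n c.-1 k) /\ (c < k -> A n c.-1 k <= A n c k).

Lemma Ap_le n r m : 0 < n -> r.*2 < n -> Qa n -> Ap n r m <= A n r m.
Proof.
move=> n0 hr Q; case: r hr => [|r] hr //=.
by have := Q r.+1 m isT hr.
Qed.

Lemma stepA n : 0 < n -> Qa n -> Qc n -> Qa n.+1.
Proof.
move=> n0 Qan Qcn j k j0 hj.
case/orP: (krange k n.+1) => hk; first by rewrite !A_out.
case: j j0 hj => // j _ hj.
rewrite /= !A_rec //; apply: leq_add.
  apply: sum_le => m _ /=; apply: Ap_le => //; nlia.
case: (ltnP j.+1.*2 n) => hlt.
  by apply: sum_le => m _; apply: (Qan j.+1 m isT hlt).
have hn : n = j.+1.*2 by nlia.
case: (ltnP j.+1 k) => hjk.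
  apply: sum_le => m /andP[hm _].
  by apply: (proj2 (Qcn _ hn m)); nlia.
apply: (split_le (X := A n j.+1) (Y := A n j)); first by nlia.
  exact: (@Tot n j.+1 isT hn).
apply: sum_le => m /andP[_ hm].
by apply: (proj1 (Qcn _ hn m)); nlia.
Qed.

Lemma stepB n : 0 < n -> Qb n -> Qc n -> Qb n.+1.
Proof.
move=> n0 Qbn Qcn j k hj.
case/orP: (krange k n.+1) => hk; first by rewrite !A_out.
case: j hj => [|j] hj; first by nlia.
case: j hj => [|j] hj; first by nlia.
rewrite /= !A_rec //; apply: leq_add; last first.
  by apply: sum_le => m _; apply: Qbn; nlia.
rewrite /Ap.
case: (ltnP n j.+1.*2) => hlt.
  by apply: sum_le => m _; apply: (Qbn j.+1 m hlt).
have hn : n = j.+1.*2 by nlia.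
case: (leqP k j.+2) => hjk.
  apply: sum_le => m /andP[_ hm].
  by apply: (proj1 (Qcn _ hn m)); nlia.
apply: (split_le2 (X := A n j.+1) (Y := A n j) (b := n.+2)); first by nlia.
  exact: (@Tot n j.+1 isT hn).
apply: sum_le => m /andP[hm _].
by apply: (proj2 (Qcn _ hn m)); nlia.
Qed.

Lemma stepC n : 0 < n -> Qa n -> Qc n.+1.
Proof.
move=> n0 Qan c hc k.
case: c hc => [//|r] hc.
case/orP: (krange k n.+1) => hk; first by rewrite !A_out.
rewrite /= !A_rec //=.
have eT1 : \sum_(k <= m < n.+2) A n r.+1 m = \sum_(0 <= m < n.+2 - k) Ap n r m.
  transitivity (\sum_(k <= m < n.+2) Ap n r (n.+1 - m)).
    apply: eq_big_nat => m _; case: r hc => [|r'] hc.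
      have -> : A n 1 m = 0 by apply: A_big => //; nlia.
      by [].
    rewrite /= A_sym //; [congr (A _ _ _); nlia | nlia].
  rewrite sum_rev //; last by nlia.
  by rewrite subnn.
have eT2 : \sum_(k <= m < n.+2) A n r m = \sum_(0 <= m < n.+2 - k) A n r m.
  transitivity (\sum_(k <= m < n.+2) A n r (n.+1 - m)).
    apply: eq_big_nat => m _.
    rewrite A_sym //; [congr (A _ _ _); nlia | nlia].
  rewrite sum_rev //; last by nlia.
  by rewrite subnn.
rewrite eT1 eT2.
have HYX : forall m, Ap n r m <= A n r m by move=> m; apply: Ap_le => //; nlia.
split => hk2.
  by apply: cross => //; nlia.
rewrite addnC [X in _ <= X]addnC; apply: cross => //; nlia.
Qed.

Lemma Qall n : 0 < n -> [/\ Qa n, Qb n & Qc n].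
Proof.
elim: n => // n IH _.
case: n IH => [_|n IH].
  split.
  - by move=> j k j0 hj; nlia.
  - by move=> j k hj; rewrite A_big //; nlia.
  - by move=> c hc; nlia.
have [Qa' Qb' Qc'] := IH isT.
split; [exact: stepA | exact: stepB | exact: stepC].
Qed.

Lemma mono d j k : 0 < d -> 0 < k <= d ->
  ((A d.+1 j k <= A d.+1 j k.+1) = (A d j k <= Ap d j k)) /\
  ((A d.+1 j k.+1 <= A d.+1 j k) = (Ap d j k <= A d j k)).
Proof.
move=> d0 hk.
have E1 : A d.+1 j k = \sum_(0 <= m < k) Ap d j m + A d j k + \sum_(k.+1 <= m < d.+2) A d j m.
  rewrite A_rec //; last by nlia.
  by rewrite (big_ltn (m := k)) ?addnA //; nlia.
have E2 : A d.+1 j k.+1 = \sum_(0 <= m < k) Ap d j m + Ap d j k + \sum_(k.+1 <= m < d.+2) A d j m.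
  rewrite A_rec //; last by nlia.
  by rewrite big_nat_recr.
by rewrite E1 E2 !leq_add2r !leq_add2l.
Qed.

Unset Implicit Arguments.

Theorem corollary4p9 (d : nat) (hd : 1 <= d) :
  (* (i) *)
  (forall j, (d + 2) %/ 2 <= j -> j <= d ->
     forall k, 1 <= k -> k <= d -> A d.+1 j k <= A d.+1 j k.+1) /\
  (* (ii) *)
  (forall j, j <= (d - 1) %/ 2 ->
     forall k, 1 <= k -> k <= d -> A d.+1 j k >= A d.+1 j k.+1) /\
  (* (iii) *)
  (~~ odd d ->
     (forall k, 1 <= k -> k <= d %/ 2 -> A d.+1 (d %/ 2) k <= A d.+1 (d %/ 2) k.+1) /\
     (forall k, d %/ 2 + 1 <= k -> k <= d -> A d.+1 (d %/ 2) k >= A d.+1 (d %/ 2) k.+1)) /\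
  (* (iv) *)
  (forall j, j <= d - 1 -> A d.+1 j 1 = A d.+1 j.+1 d.+1).
Proof.
have [Qa Qb Qc] := Qall hd.
split; [|split; [|split]].
- move=> j hj1 hj2 k k1 k2.
  rewrite (mono j (hd : 0 < d) (_ : 0 < k <= d)).1; last by nlia.
  rewrite divn2 leq_half_double in hj1.
  case: j hj1 hj2 => [|j] hj1 hj2; first by nlia.
  by apply: Qb; nlia.
- move=> j hj k k1 k2.
  rewrite (mono j (hd : 0 < d) (_ : 0 < k <= d)).2; last by nlia.
  rewrite divn2 geq_half_double in hj.
  by apply: Ap_le => //; nlia.
- move=> ev; rewrite divn2.
  have hc := esym (even_halfK ev).
  set c := d./2 in hc *.
  case: c hc => [|c] hc; first by nlia.
  split.
  + move=> k k1 k2.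
    rewrite (mono c.+1 (hd : 0 < d) (_ : 0 < k <= d)).1; last by nlia.
    exact: (proj1 (Qc _ hc k) k2).
  + move=> k k1 k2.
    rewrite (mono c.+1 (hd : 0 < d) (_ : 0 < k <= d)).2; last by nlia.
    by apply: (proj2 (Qc _ hc k)); nlia.
- move=> j hj.
  rewrite !A_rec //; last by nlia.
  rewrite big_nat1 Ap0 // add0n big_nat1 [A d j.+1 d.+1]A_out //; last by rewrite ltnSn orbT.
  rewrite addn0 /= [in RHS]big_ltn // [A d j 0]A_out // add0n.
  by rewrite big_nat_recr //= [A d j d.+1]A_out ?ltnSn ?orbT // addn0.
Qed.
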